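(* Let $p$ be a prime, $k,t\ge0$ integers, and $a,b,h$ integers with $\gcd(ab,p)=1$. Then $|R^\ast_{p^t,b}(p^k,a,h)|\le\gcd(h,p^k)$.
   Context: $e(z)=e^{2\pi iz}$. For positive integers $q,W$ and integers $a,b,h$, $R^\ast_{W,b}(q,a,h)=\sum_{1\le c\le qW,\ \gcd(c,q)=1,\ c\equiv b\ (\mathrm{mod}\ W)}e\big(\frac{ach}{qW}\big)$. Here $\gcd(0,n)=n$. *)

(* Defs.v *)
From HB Require Import structures.
From mathcomp Require Import all_boot all_order all_algebra.
From mathcomp Require Import complex.
From mathcomp Require Import reals trigo.
Set Implicit Arguments. Unset Strict Implicit. Unset Printing Implicit Defensive.
Import Order.TTheory GRing.Theory Num.Theory.
Local Open Scope ring_scope.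
Local Open Scope complex_scope.

Definition e_ (R : realType) (x : R) : R[i] :=
  (cos (2 * pi * x))%:C + 'i * (sin (2 * pi * x))%:C.

Definition Rstar (R : realType) (q W : nat) (a b h : int) : R[i] :=
  \sum_(1 <= c < (q * W).+1 | coprime c q && ((c%:Z == b %[mod W%:Z])%Z))
     e_ ((a * c%:Z * h)%:~R / (q * W)%:R).

(* Main.v *)
Require Import Defs.
From HB Require Import structures.
From mathcomp Require Import all_boot all_order all_algebra.
From mathcomp Require Import complex.
From mathcomp Require Import reals trigo.
From mathcomp Require Import ring lra zify.
Import Order.TTheory GRing.Theory Num.Theory.
Local Open Scope ring_scope.
Local Open Scope complex_scope.

Lemma eD (R : realType) (x y : R) : e_ (x + y) = e_ x * e_ y.
Proof.
rewrite /e_ mulrDr cosD sinD.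
simpc. congr (_ +i* _); ring.
Qed.
Lemma e0 (R : realType) : e_ (0:R) = 1.
Proof. by rewrite /e_ mulr0 cos0 sin0 mulr0 addr0. Qed.

Lemma eN (R : realType) (x : R) : e_ (- x) * e_ x = 1.
Proof. by rewrite -eD addNr e0. Qed.

Lemma enat (R : realType) (n : nat) : e_ (n%:R : R) = 1.
Proof.
rewrite /e_; have -> : 2 * pi * (n%:R : R) = 0 + (pi *+ 2) *+ n.
  by rewrite add0r mulr_natr mulr_natl.
rewrite (periodicn (@cosD2pi R)) (periodicn (@sinD2pi R)) cos0 sin0.
by rewrite rmorph0 mulr0 addr0.
Qed.

Lemma eint (R : realType) (n : int) : e_ (n%:~R : R) = 1.
Proof.
case: n => n; first exact: enat.
have := @eN R ((Negz n)%:~R). by rewrite NegzE mulrNz opprK -pmulrn enat mul1r.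
Qed.

Lemma epow (R : realType) (n : nat) (x : R) : e_ (n%:R * x) = e_ x ^+ n.
Proof.
elim: n => [|n IH]; first by rewrite mul0r e0 expr0.
by rewrite exprS -IH -eD -natr1 mulrDl mul1r addrC.
Qed.

Lemma e_re (R : realType) (x : R) : e_ x = 1 -> cos (2 * pi * x) = 1.
Proof. rewrite /e_ => /(congr1 (@complex.Re R)). simpc => h; exact: h. Qed.

Lemma cos_ne1 (R : realType) (y : R) : 0 < y < 1 -> cos (2 * pi * y) != 1.
Proof.
move=> /andP[y0 y1]; apply/eqP.
have -> : 2 * pi * y = (pi * y) *+ 2 by rewrite -[(pi * y) *+ 2]mulr_natl mulrA.
rewrite cos_mulr2n => h.
have h2 : cos (pi * y) ^+ 2 = 1.
  move: h; rewrite mulr2n; set c := cos (pi * y) ^+ 2; lra.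
have : sin (pi * y) ^+ 2 = 0 by rewrite sin2cos2 h2 subrr.
move/eqP; rewrite expf_eq0 /= => /eqP hs.
have : 0 < sin (pi * y).
  apply: sin_gt0_pi; rewrite mulr_gt0 ?pi_gt0 //=.
  by rewrite -ltr_pdivlMl ?pi_gt0 // mulVf ?gt_eqF ?pi_gt0 // ltr_pMr ?pi_gt0.
by rewrite hs ltxx.
Qed.

Lemma e_dvd (R : realType) (m : int) (N : nat) : (0 < N)%N ->
  e_ (m%:~R / N%:R : R) = 1 -> (N%:Z %| m)%Z.
Proof.
move=> N0 he; apply/dvdz_mod0P.
set q := (m %/ N)%Z; set s := (m %% N)%Z.
have hN : (N%:R : R) != 0 by rewrite pnatr_eq0 -lt0n.
have : m%:~R / N%:R = q%:~R + s%:~R / (N%:R : R).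
  rewrite {1}(divz_eq m N) -/q -/s intrD intrM /= mulrDl.
  by rewrite -[(N%:Z)%:~R]pmulrn mulfK.
move=> hm; rewrite hm eD eint mul1r in he.
have s0 : (0 <= s)%R by rewrite modz_ge0 // eqz_nat -lt0n.
have sN : (s < N)%R by rewrite ltz_pmod // ltz_nat.
apply/eqP; apply: contraT => sne0.
have hy : 0 < s%:~R / (N%:R : R) < 1.
  rewrite divr_gt0 ?ltr0n //=; last by rewrite ltr0z lt_neqAle eq_sym sne0.
  by rewrite ltr_pdivrMr ?ltr0n // mul1r -[(N%:R : R)]/((N%:Z)%:~R) ltr_int.
by move: (@cos_ne1 R _ hy); rewrite (@e_re R _ he) eqxx.
Qed.
Lemma geom (F : fieldType) (u : F) (M : nat) : u ^+ M = 1 ->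
  \sum_(j < M) u ^+ j = if u == 1 then M%:R else 0.
Proof.
move=> hM; case: eqP => [->|/eqP u1].
  by under eq_bigr do rewrite expr1n; rewrite sumr_const card_ord.
have := subrX1 u M; rewrite hM subrr => /esym/eqP.
by rewrite mulf_eq0 subr_eq0 (negbTE u1) => /eqP.
Qed.

Lemma reindex (V : nmodType) (F : nat -> V) (W q r : nat) : (r < W)%N ->
  \sum_(0 <= c < q * W | (c %% W)%N == r) F c = \sum_(0 <= j < q) F (j * W + r)%N.
Proof.
move=> rW; elim: q => [|q IH]; first by rewrite mul0n !big_geq.
rewrite big_nat_recr //= -IH mulSn addnC.
rewrite (big_cat_nat _ (n := q * W)) //=; last by rewrite leq_addr.
congr (_ + _).
rewrite -{1}(add0n (q * W)%N) big_addn addKn.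
rewrite big_nat_cond (eq_bigl (fun i => i == r)); last first.
  move=> i /=; rewrite (addnC i) modnMDl; case: (ltnP i W) => hi /=.
    by rewrite modn_small.
  by apply/esym/eqP => e; move: hi; rewrite e leqNgt rW.
by rewrite big_nat1_eq /= rW addnC.
Qed.

Arguments e_dvd {R} m N.
Local Close Scope complex_scope.

Lemma gcd_bound (R : realType) (h : int) (p k d : nat) : prime p ->
  (d %| `|h|)%N -> (d %| p ^ k)%N -> (d%:R : R[i]) <= (gcdz h (p ^ k)%:Z)%:~R.
Proof.
move=> pp dh dp; rewrite /gcdz absz_nat. change ((d%:R : R[i]) <= (gcdn `|h| (p ^ k))%:R). rewrite ler_nat.
apply: dvdn_leq; first by rewrite gcdn_gt0 expn_gt0 (prime_gt0 pp) !orbT. by rewrite dvdn_gcd dh dp.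
Qed.

Lemma shift_sum (V : zmodType) (G : nat -> V) N : (0 < N)%N -> G N = G 0%N ->
  \sum_(1 <= c < N.+1) G c = \sum_(0 <= c < N) G c.
Proof.
move=> N0 hG; apply: (@addrI _ (G 0%N)).
by rewrite -big_ltn // big_nat_recr //= addrC hG.
Qed.

Theorem lemma2p10 (R : realType) (p k t : nat) (a b h : int) :
  prime p -> coprimez (a * b) p%:Z ->
  `| Rstar R (p ^ k) (p ^ t) a b h | <= ((gcdz h (p ^ k)%:Z)%:~R : R[i]).
Proof.
move=> pp cab.
have p0 : (0 < p)%N by exact: prime_gt0.
have N0 : (0 < p ^ k * p ^ t)%N by rewrite muln_gt0 !expn_gt0 p0.
set N := (p ^ k * p ^ t)%N in N0 *.
have cap : coprime `|a| p by move: cab; rewrite coprimezE abszM coprimeMl => /andP[].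
have cbp : coprime `|b| p by move: cab; rewrite coprimezE abszM coprimeMl => /andP[].
set th : R := (a * h)%:~R / N%:R.
set z := e_ th.
have hterm : forall c : nat, e_ ((a * c%:Z * h)%:~R / N%:R) = z ^+ c.
  move=> c; rewrite -epow /th mulrA; congr (e_ (_ / _)).
  by rewrite (mulrAC a) [LHS]intrM mulrC.
have zN : z ^+ N = 1.
  by rewrite -epow /th mulrC divfK ?pnatr_eq0 -?lt0n // eint.
have key : forall j, (j <= k + t)%N -> z ^+ (p ^ j) = 1 ->
    ((p ^ (k + t - j))%:Z %| h)%Z.
  move=> j jkt; rewrite -epow => he.
  have eN : N = (p ^ j * p ^ (k + t - j))%N by rewrite -expnD subnKC // /N -expnD.
  have pj : (p ^ j)%:R != 0 :> R by rewrite pnatr_eq0 -lt0n expn_gt0 p0.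
  have pM : (p ^ (k + t - j))%:R != 0 :> R by rewrite pnatr_eq0 -lt0n expn_gt0 p0.
  have hth : (p ^ j)%:R * th = (a * h)%:~R / (p ^ (k + t - j))%:R.
    rewrite /th eN natrM; field; by rewrite pj pM.
  rewrite hth in he.
  have := e_dvd (a * h) (p ^ (k + t - j)) _ he.
  rewrite expn_gt0 p0 => /(_ isT).
  rewrite Gauss_dvdzr // coprimezE absz_nat.
  apply: coprimeXl; by rewrite coprime_sym.
rewrite /Rstar -/N.
under eq_bigr => c _ do rewrite hterm.
have pt0 : (0 < p ^ t)%N by rewrite expn_gt0 p0.
have pk0 : (0 < p ^ k)%N by rewrite expn_gt0 p0.
set r := `|(b %% (p ^ t)%:Z)%Z|%N.
have hr : (b %% (p ^ t)%:Z)%Z = r%:Z.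
  by rewrite /r gez0_abs // modz_ge0 // eqz_nat -lt0n.
have rW : (r < p ^ t)%N by rewrite -ltz_nat -hr ltz_pmod // ltz_nat.
have hmod : forall c : nat, (c%:Z == b %[mod (p ^ t)%:Z])%Z = ((c %% p ^ t)%N == r).
  by move=> c; rewrite hr modz_nat eqz_nat.
under eq_bigl do rewrite hmod.
rewrite big_mkcond shift_sum //; last first.
  rewrite zN expr0 /N /coprime gcdnC gcdnMr gcd0n modnMl mod0n //.
rewrite -big_mkcond /=.
have nz : `|z| = 1.
  have := congr1 Num.norm zN; rewrite normrX normr1 => /eqP.
  by rewrite pexpr_eq1 // => /eqP.
have [kt|] := boolP ((k == 0%N) || (0 < t)%N).
  rewrite (eq_bigl (fun c => (c %% p ^ t)%N == r)); last first.
    move=> c /=; case E: (_ == r); rewrite ?andbF ?andbT //.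
    case: (posnP k) => [-> | kpos]; first by rewrite expn0 coprimen1.
    have tpos : (0 < t)%N by move: kt; rewrite eqn0Ngt kpos.
    rewrite coprime_pexpr //.
    move: E; rewrite -hmod eqz_mod_dvd => hd.
    have hp : (p%:Z %| (p ^ t)%:Z)%Z := @dvdn_exp t p p tpos (dvdnn p).
    have hpc := dvdz_trans hp hd.
    rewrite coprime_sym prime_coprime //; apply/negP => pc.
    have : (p%:Z %| c%:Z - (c%:Z - b))%Z by rewrite rpredB.
    rewrite opprB addrC subrK => pb.
    by move: cbp; rewrite coprime_sym prime_coprime // => /negP; apply.
  rewrite /N reindex //.
  under eq_bigr do rewrite exprD mulnC exprM.
  rewrite -mulr_suml big_mkord geom; last by rewrite -exprM mulnC zN.
  rewrite normrM normrX nz expr1n mulr1.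
  case: ifP => [/eqP z1 | _]; last by rewrite normr0 ler0z.
  have := key t (leq_addl _ _) z1; rewrite addnK => hk.
  by rewrite normr_nat; apply: gcd_bound.
rewrite negb_or -leqNgt leqn0 => /andP[k0 /eqP t0].
subst t.
have r0 : r = 0%N by move: rW; rewrite expn0; case: (r).
have [k' ek] : exists k', k = k'.+1 by case: (k) k0 => [//|k''] _; exists k''.
subst k.
rewrite (eq_bigl (fun c => ~~ (p %| c)%N)); last first.
  move=> c /=; rewrite r0 expn0 modn1 andbT coprime_pexpr //.
  by rewrite coprime_sym prime_coprime.
have -> : \sum_(0 <= c < N | ~~ (p %| c)%N) z ^+ c =
    \sum_(0 <= c < N) z ^+ c - \sum_(0 <= c < N | (p %| c)%N) z ^+ c.
  by rewrite [X in _ = X - _](bigID (fun c => (p %| c)%N)) /= addrAC subrr add0r.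
have zk : z ^+ (p ^ k'.+1) = 1 by move: zN; rewrite /N expn0 muln1.
have -> : \sum_(0 <= c < N | (p %| c)%N) z ^+ c = \sum_(j < p ^ k') (z ^+ p) ^+ j.
  rewrite /N expn0 muln1 expnSr (eq_bigl (fun c => (c %% p)%N == 0%N)) //.
  rewrite reindex // big_mkord; apply: eq_bigr => j _.
  by rewrite addn0 mulnC exprM.
rewrite /N expn0 muln1 big_mkord geom // geom; last by rewrite -exprM -expnS.
case: (eqVneq z 1) => [z1|z1].
  have hk0 : ((p ^ k'.+1)%:Z %| h)%Z.
    by have := key 0%N isT; rewrite expn0 expr1 addn0 subn0 => /(_ z1).
  rewrite z1 expr1n eqxx -natrB; last by rewrite expnS leq_pmull.
  rewrite normr_nat; apply: le_trans (@gcd_bound R h p k'.+1 (p ^ k'.+1) pp hk0 (dvdnn _)).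
  by rewrite ler_nat leq_subr.
case: (eqVneq (z ^+ p) 1) => [zp|zp]; last first.
  by rewrite subrr normr0 ler0z.
have hk1 : ((p ^ k')%:Z %| h)%Z.
  have := key 1%N; rewrite expn1 addn0 subn1 /= => /(_ _ zp); apply.
  by [].
rewrite sub0r normrN normr_nat.
by apply: gcd_bound => //; rewrite dvdn_exp2l.
Qed.
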